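(* Let $\omega$ be a rectilinearly-convex obstacle that is a rectangle (i.e. has exactly four extreme corners). Then $\{d\}$ is a minimum skeleton for $\omega$, where $d$ is either of the two diagonals of $\omega$.
   Context: An obstacle $\omega$ is a simple polygon in $\mathbb{R}^2$ (a closed, bounded polygonal region without holes whose boundary does not intersect itself), assumed in general position (no three of its vertices are collinear); vertices and edges of $\omega$ are those of its boundary. $\omega$ is rectilinear if each edge is horizontal or vertical, and a rectilinear obstacle is rectilinearly-convex if any two points of $\omega$ can be joined by a shortest rectilinear path (made of horizontal and vertical segments, of minimum $\ell_1$ length) contained in $\omega$. A corner point of a rectilinear path is a point where a horizontal and a vertical segment of the path meet. A set $S$ of closed line segments is inside $\omega$ if the union of its elements is contained in $\omega$. Such an $S$ is a skeleton for $\omega$ if for every pair of points $p,q$ not in the interior of $\omega$ such that every shortest rectilinear path between $p$ and $q$ with at most one corner point meets the interior of $\omega$, each such path intersects some element of $S$; a minimum skeleton is one with the fewest segments. $B(\omega)$ is the smallest closed axis-parallel rectangle containing $\omega$; the extreme edges are the edges of $\omega$ lying on the boundary of $B(\omega)$; an extreme corner is a vertex of $\omega$ that is a common endpoint of two extreme edges. A diagonal of $\omega$ is a line segment contained in $\omega$ joining two diagonally opposite extreme corners. *)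

(* Defs.v *)
From Stdlib Require Import Reals Lra List.
Import ListNotations.
Open Scope R_scope.

Definition pt := (R * R)%type.

Definition seg_pts (a b : pt) (z : pt) : Prop :=
  exists t, 0 <= t <= 1 /\
    fst z = (1 - t) * fst a + t * fst b /\
    snd z = (1 - t) * snd a + t * snd b.

Definition segment := (pt * pt)%type.
Definition seg_set (s : segment) : pt -> Prop := seg_pts (fst s) (snd s).

Definition l1dist (a b : pt) : R := Rabs (fst a - fst b) + Rabs (snd a - snd b).

Definition hstep (a b : pt) : Prop := snd a = snd b /\ fst a <> fst b.
Definition vstep (a b : pt) : Prop := fst a = fst b /\ snd a <> snd b.

Fixpoint rpath (p : pt) (l : list pt) : Prop :=
  match l with
  | nil => True
  | b :: l' => (hstep p b \/ vstep p b) /\ rpath b l'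
  end.

Definition rend (p : pt) (l : list pt) : pt := last l p.

Fixpoint plen (p : pt) (l : list pt) : R :=
  match l with
  | nil => 0
  | b :: l' => l1dist p b + plen b l'
  end.

Fixpoint on_path (p : pt) (l : list pt) (z : pt) : Prop :=
  match l with
  | nil => z = p
  | b :: l' => seg_pts p b z \/ on_path b l' z
  end.

(* number of corner points: interior vertices where a horizontal and a
   vertical segment meet (steps are nondegenerate, so a step a->b is
   horizontal iff snd a = snd b) *)
Fixpoint ncorners (p : pt) (l : list pt) : nat :=
  match l with
  | b :: ((c :: _) as l') =>
      ((if Req_EM_T (snd p) (snd b) then
          (if Req_EM_T (snd b) (snd c) then 0 else 1)
        else (if Req_EM_T (snd b) (snd c) then 1 else 0)) + ncorners b l')%nat
  | _ => 0%nat
  end.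

Definition shortest_rpath (p q : pt) (l : list pt) : Prop :=
  rpath p l /\ rend p l = q /\
  forall l', rpath p l' -> rend p l' = q -> plen p l <= plen p l'.

Definition short1 (p q : pt) (l : list pt) : Prop :=
  shortest_rpath p q l /\ (ncorners p l <= 1)%nat.

Definition interior (w : pt -> Prop) (z : pt) : Prop :=
  exists e, 0 < e /\ forall y, Rabs (fst y - fst z) < e ->
                             Rabs (snd y - snd z) < e -> w y.

Definition inside (w : pt -> Prop) (S : list segment) : Prop :=
  forall s z, In s S -> seg_set s z -> w z.

Definition skeleton (w : pt -> Prop) (S : list segment) : Prop :=
  inside w S /\
  forall p q, ~ interior w p -> ~ interior w q ->
    (forall l, short1 p q l -> exists z, on_path p l z /\ interior w z) ->
    forall l, short1 p q l ->
      exists s z, In s S /\ seg_set s z /\ on_path p l z.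

Definition min_skeleton (w : pt -> Prop) (S : list segment) : Prop :=
  skeleton w S /\ forall S', skeleton w S' -> (length S <= length S')%nat.

Definition rect (x1 x2 y1 y2 : R) (z : pt) : Prop :=
  x1 <= fst z <= x2 /\ y1 <= snd z <= y2.

(* Main.v *)
Require Import Defs.
From Stdlib Require Import Reals Lra Lia List.
Import ListNotations.
Open Scope R_scope.

Definition btw (a x c : R) : Prop := (a <= x <= c) \/ (c <= x <= a).
Definition Lh (p q z : pt) : Prop :=
  (snd z = snd p /\ btw (fst p) (fst z) (fst q)) \/
  (fst z = fst q /\ btw (snd p) (snd z) (snd q)).
Definition Lv (p q z : pt) : Prop :=
  (fst z = fst p /\ btw (snd p) (snd z) (snd q)) \/
  (snd z = snd q /\ btw (fst p) (fst z) (fst q)).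

Lemma div01 n d : 0 < d -> 0 <= n <= d -> 0 <= n / d <= 1.
Proof.
  intros Hd Hn. assert (E : n = (n / d) * d) by (field; lra).
  set (t := n / d) in *. split; nra.
Qed.

Lemma seg_h a b z : snd a = snd b -> snd z = snd a ->
  btw (fst a) (fst z) (fst b) -> seg_pts a b z.
Proof.
  intros Hab Hz Hb. destruct (Req_EM_T (fst a) (fst b)) as [E|E].
  - exists 0. split; [lra|]. unfold btw in Hb. split; [lra|]. lra.
  - exists ((fst z - fst a) / (fst b - fst a)).
    assert (fst b - fst a <> 0) by lra.
    split; [|split; [field; auto|]].
    + unfold btw in Hb. destruct Hb as [Hb|Hb].
      * assert (0 < fst b - fst a) by lra. apply div01; lra.
      * assert (0 < fst a - fst b) by lra.
        replace ((fst z - fst a) / (fst b - fst a)) with ((fst a - fst z) / (fst a - fst b)) by (field; lra).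
        apply div01; lra.
    + rewrite <- Hab, Hz. ring.
Qed.

Lemma seg_v a b z : fst a = fst b -> fst z = fst a ->
  btw (snd a) (snd z) (snd b) -> seg_pts a b z.
Proof.
  intros Hab Hz Hb. destruct (Req_EM_T (snd a) (snd b)) as [E|E].
  - exists 0. split; [lra|]. unfold btw in Hb. split; lra.
  - exists ((snd z - snd a) / (snd b - snd a)).
    assert (snd b - snd a <> 0) by lra.
    split; [|split; [|field; auto]].
    + unfold btw in Hb. destruct Hb as [Hb|Hb].
      * assert (0 < snd b - snd a) by lra. apply div01; lra.
      * assert (0 < snd a - snd b) by lra.
        replace ((snd z - snd a) / (snd b - snd a)) with ((snd a - snd z) / (snd a - snd b)) by (field; lra).
        apply div01; lra.
    + rewrite <- Hab, Hz. ring.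
Qed.

Lemma seg_h_inv a b z : snd a = snd b -> seg_pts a b z ->
  snd z = snd a /\ btw (fst a) (fst z) (fst b).
Proof.
  intros Hab [t [Ht [H1 H2]]]. split.
  - rewrite H2, <- Hab. ring.
  - unfold btw. rewrite H1. destruct (Rle_dec (fst a) (fst b)).
    + left; split; nra.
    + right; split; nra.
Qed.

Lemma seg_v_inv a b z : fst a = fst b -> seg_pts a b z ->
  fst z = fst a /\ btw (snd a) (snd z) (snd b).
Proof.
  intros Hab [t [Ht [H1 H2]]]. split.
  - rewrite H1, <- Hab. ring.
  - unfold btw. rewrite H2. destruct (Rle_dec (snd a) (snd b)).
    + left; split; nra.
    + right; split; nra.
Qed.

Lemma rend_cons p b l : rend p (b :: l) = rend b l.
Proof.
  unfold rend. revert b. induction l as [|c l IH]; intros b; simpl; auto.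
  destruct l; simpl in *; auto.
Qed.

Lemma l1_tri a b c : l1dist a c <= l1dist a b + l1dist b c.
Proof.
  unfold l1dist.
  pose proof (Rabs_triang (fst a - fst b) (fst b - fst c)).
  pose proof (Rabs_triang (snd a - snd b) (snd b - snd c)).
  replace (fst a - fst c) with ((fst a - fst b) + (fst b - fst c)) by ring.
  replace (snd a - snd c) with ((snd a - snd b) + (snd b - snd c)) by ring.
  lra.
Qed.

Lemma plen_ge p l : l1dist p (rend p l) <= plen p l.
Proof.
  revert p. induction l as [|b l IH]; intros p.
  - simpl. unfold rend, l1dist. simpl. unfold Rminus. rewrite !Rplus_opp_r, Rabs_R0. lra.
  - rewrite rend_cons. simpl. pose proof (IH b). pose proof (l1_tri p b (rend b l)). lra.
Qed.

Definition tight p l := plen p l = l1dist p (rend p l).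

Lemma abs_btw a b c : Rabs (a - b) + Rabs (b - c) <= Rabs (a - c) -> btw a b c.
Proof.
  unfold btw, Rabs. destruct (Rcase_abs (a-b)), (Rcase_abs (b-c)), (Rcase_abs (a-c)); intros; lra.
Qed.

Lemma tight_cons p b l : tight p (b :: l) ->
  tight b l /\ btw (fst p) (fst b) (fst (rend b l)) /\ btw (snd p) (snd b) (snd (rend b l)).
Proof.
  unfold tight. rewrite rend_cons. simpl. intros H.
  pose proof (plen_ge b l). pose proof (l1_tri p b (rend b l)).
  assert (E : plen b l = l1dist b (rend b l)) by lra.
  split; auto.
  assert (l1dist p b + l1dist b (rend b l) <= l1dist p (rend b l)) by lra.
  unfold l1dist in H2.
  pose proof (Rabs_triang (fst p - fst b) (fst b - fst (rend b l))).
  pose proof (Rabs_triang (snd p - snd b) (snd b - snd (rend b l))).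
  replace (fst p - fst b + (fst b - fst (rend b l))) with (fst p - fst (rend b l)) in H3 by ring.
  replace (snd p - snd b + (snd b - snd (rend b l))) with (snd p - snd (rend b l)) in H4 by ring.
  split; apply abs_btw; lra.
Qed.

Lemma btw_split a b c x : btw a b c -> btw a x c -> btw a x b \/ btw b x c.
Proof. unfold btw; intros; lra. Qed.


Lemma ncorners_cons2 p b c l : ncorners p (b :: c :: l) =
  ((if Req_EM_T (snd p) (snd b) then
     (if Req_EM_T (snd b) (snd c) then 0 else 1)
   else (if Req_EM_T (snd b) (snd c) then 1 else 0)) + ncorners b (c :: l))%nat.
Proof. reflexivity. Qed.

Lemma straight l : forall b p, rpath p (b::l) -> tight p (b::l) -> ncorners p (b::l) = 0%nat ->
  (hstep p b -> snd (rend b l) = snd p /\ forall z, snd z = snd p ->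
      btw (fst p) (fst z) (fst (rend b l)) -> on_path p (b::l) z) /\
  (vstep p b -> fst (rend b l) = fst p /\ forall z, fst z = fst p ->
      btw (snd p) (snd z) (snd (rend b l)) -> on_path p (b::l) z).
Proof.
  induction l as [|c l IH]; intros b p Hr Ht Hn.
  - unfold rend; simpl. split; intros [H1 H2].
    + split; [auto|]. intros z Hz Hb. left. apply seg_h; solve [auto|congruence].
    + split; [auto|]. intros z Hz Hb. left. apply seg_v; solve [auto|congruence].
  - destruct (tight_cons _ _ _ Ht) as [Ht' [Bx By]].
    simpl in Hr. destruct Hr as [Hpb [Hbc Hr]].
    assert (Hr' : rpath b (c :: l)) by (simpl; auto).
    rewrite ncorners_cons2 in Hn.
    split; intros [H1 H2].
    + destruct (Req_EM_T (snd p) (snd b)) as [_|E]; [|contradiction].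
      destruct (Req_EM_T (snd b) (snd c)) as [E2|E2]; [|lia].
      assert (Hn' : ncorners b (c :: l) = 0%nat) by lia.
      destruct (IH c b Hr' Ht' Hn') as [IHh _].
      assert (Hh : hstep b c) by (destruct Hbc as [Hbc|[_ Hbc]]; [auto|contradiction]).
      destruct (IHh Hh) as [Ey Cov]. rewrite rend_cons in *.
      split; [congruence|].
      intros z Hz Hb. destruct (btw_split _ _ _ _ Bx Hb) as [Hb1|Hb2].
      * left. apply seg_h; auto.
      * right. apply Cov; auto. congruence.
    + destruct (Req_EM_T (snd p) (snd b)) as [E|_]; [contradiction|].
      destruct (Req_EM_T (snd b) (snd c)) as [E2|E2]; [lia|].
      assert (Hn' : ncorners b (c :: l) = 0%nat) by lia.
      destruct (IH c b Hr' Ht' Hn') as [_ IHv].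
      assert (Hv : vstep b c) by (destruct Hbc as [[Hbc _]|Hbc]; [contradiction|auto]).
      destruct (IHv Hv) as [Ex Cov]. rewrite rend_cons in *.
      split; [congruence|].
      intros z Hz Hb. destruct (btw_split _ _ _ _ By Hb) as [Hb1|Hb2].
      * left. apply seg_v; auto.
      * right. apply Cov; auto. congruence.
Qed.


Lemma pt_eq (z b : pt) : fst z = fst b -> snd z = snd b -> z = b.
Proof. destruct z, b; simpl; intros; subst; auto. Qed.

Lemma btw_refl a c : btw a a c.
Proof. unfold btw; lra. Qed.
Lemma btw_same a x : btw a x a -> x = a.
Proof. unfold btw; lra. Qed.

Lemma lshape l : forall b p, rpath p (b::l) -> tight p (b::l) -> (ncorners p (b::l) <= 1)%nat ->
  (hstep p b -> forall z, Lh p (rend b l) z -> on_path p (b::l) z) /\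
  (vstep p b -> forall z, Lv p (rend b l) z -> on_path p (b::l) z).
Proof.
  induction l as [|c l IH]; intros b p Hr Ht Hn.
  - unfold rend, Lh, Lv; simpl. split; intros [H1 H2] z Hz.
    + destruct Hz as [[Hz1 Hz2]|[Hz1 Hz2]].
      * left. apply seg_h; auto.
      * right. apply pt_eq; auto. rewrite <- H1 in Hz2. apply btw_same in Hz2. congruence.
    + destruct Hz as [[Hz1 Hz2]|[Hz1 Hz2]].
      * left. apply seg_v; solve [auto|congruence].
      * right. apply pt_eq; auto. rewrite <- H1 in Hz2. apply btw_same in Hz2. congruence.
  - destruct (tight_cons _ _ _ Ht) as [Ht' [Bx By]].
    simpl in Hr. destruct Hr as [Hpb [Hbc Hr]].
    assert (Hr' : rpath b (c :: l)) by (simpl; auto).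
    rewrite ncorners_cons2 in Hn. rewrite rend_cons in Bx, By.
    split; intros [H1 H2] z Hz; rewrite rend_cons in Hz; unfold Lh, Lv in Hz.
    + destruct (Req_EM_T (snd p) (snd b)) as [_|E]; [|contradiction].
      destruct (Req_EM_T (snd b) (snd c)) as [E2|E2].
      * assert (Hn' : (ncorners b (c :: l) <= 1)%nat) by lia.
        destruct (IH c b Hr' Ht' Hn') as [IHh _].
        assert (Hh : hstep b c) by (destruct Hbc as [Hbc|[_ Hbc]]; [auto|contradiction]).
        pose proof (IHh Hh) as Cov.
        destruct Hz as [[Hz1 Hz2]|[Hz1 Hz2]].
        -- destruct (btw_split _ _ _ _ Bx Hz2) as [Hb1|Hb2].
           ++ left. apply seg_h; auto.
           ++ right. apply Cov. left. split; auto. congruence.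
        -- right. apply Cov. right. split; auto. congruence.
      * assert (Hn' : ncorners b (c :: l) = 0%nat) by lia.
        destruct (straight _ _ _ Hr' Ht' Hn') as [_ Sv].
        assert (Hv : vstep b c) by (destruct Hbc as [[Hbc _]|Hbc]; [contradiction|auto]).
        destruct (Sv Hv) as [Ex Cov].
        destruct Hz as [[Hz1 Hz2]|[Hz1 Hz2]].
        -- left. apply seg_h; solve [auto|congruence].
        -- right. apply Cov. congruence. congruence.
    + destruct (Req_EM_T (snd p) (snd b)) as [E|_]; [contradiction|].
      destruct (Req_EM_T (snd b) (snd c)) as [E2|E2].
      * assert (Hn' : ncorners b (c :: l) = 0%nat) by lia.
        destruct (straight _ _ _ Hr' Ht' Hn') as [Sh _].
        assert (Hh : hstep b c) by (destruct Hbc as [Hbc|[_ Hbc]]; [auto|contradiction]).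
        destruct (Sh Hh) as [Ey Cov].
        destruct Hz as [[Hz1 Hz2]|[Hz1 Hz2]].
        -- left. apply seg_v; solve [auto|congruence].
        -- right. apply Cov. congruence. congruence.
      * assert (Hn' : (ncorners b (c :: l) <= 1)%nat) by lia.
        destruct (IH c b Hr' Ht' Hn') as [_ IHv].
        assert (Hv : vstep b c) by (destruct Hbc as [[Hbc _]|Hbc]; [contradiction|auto]).
        pose proof (IHv Hv) as Cov.
        destruct Hz as [[Hz1 Hz2]|[Hz1 Hz2]].
        -- destruct (btw_split _ _ _ _ By Hz2) as [Hb1|Hb2].
           ++ left. apply seg_v; auto.
           ++ right. apply Cov. left. split; auto. congruence.
        -- right. apply Cov. right. split; auto. congruence.
Qed.

Lemma cover p l : rpath p l -> tight p l -> (ncorners p l <= 1)%nat ->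
  (forall z, Lh p (rend p l) z -> on_path p l z) \/
  (forall z, Lv p (rend p l) z -> on_path p l z).
Proof.
  destruct l as [|b l]; intros Hr Ht Hn.
  - left. unfold rend, Lh; simpl. intros z [[H1 H2]|[H1 H2]].
    + apply btw_same in H2. apply pt_eq; auto.
    + apply btw_same in H2. apply pt_eq; auto.
  - rewrite rend_cons. destruct (lshape l b p Hr Ht Hn) as [A B].
    simpl in Hr. destruct Hr as [[H|H] _]; [left; apply A | right; apply B]; auto.
Qed.


Lemma rect_int x1 x2 y1 y2 z : x1 < fst z < x2 -> y1 < snd z < y2 ->
  Defs.interior (rect x1 x2 y1 y2) z.
Proof.
  intros Hx Hy.
  exists (Rmin (Rmin (fst z - x1) (x2 - fst z)) (Rmin (snd z - y1) (y2 - snd z))).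
  pose proof (Rmin_l (Rmin (fst z - x1) (x2 - fst z)) (Rmin (snd z - y1) (y2 - snd z))).
  pose proof (Rmin_r (Rmin (fst z - x1) (x2 - fst z)) (Rmin (snd z - y1) (y2 - snd z))).
  pose proof (Rmin_l (fst z - x1) (x2 - fst z)). pose proof (Rmin_r (fst z - x1) (x2 - fst z)).
  pose proof (Rmin_l (snd z - y1) (y2 - snd z)). pose proof (Rmin_r (snd z - y1) (y2 - snd z)).
  split.
  - apply Rmin_pos; apply Rmin_pos; lra.
  - intros y G1 G2. apply Rabs_def2 in G1. apply Rabs_def2 in G2.
    unfold rect. lra.
Qed.

Lemma int_rect x1 x2 y1 y2 z : Defs.interior (rect x1 x2 y1 y2) z ->
  x1 < fst z < x2 /\ y1 < snd z < y2.
Proof.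
  intros [e [He H]].
  assert (A : forall dx dy, -e < dx < e -> -e < dy < e -> rect x1 x2 y1 y2 (fst z + dx, snd z + dy)).
  { intros dx dy Hdx Hdy. apply H; simpl; apply Rabs_def1; lra. }
  pose proof (A (-(e/2)) 0 ltac:(lra) ltac:(lra)).
  pose proof (A (e/2) 0 ltac:(lra) ltac:(lra)).
  pose proof (A 0 (-(e/2)) ltac:(lra) ltac:(lra)).
  pose proof (A 0 (e/2) ltac:(lra) ltac:(lra)).
  unfold rect in *; simpl in *. lra.
Qed.

Lemma l1_self p : l1dist p p = 0.
Proof. unfold l1dist. unfold Rminus. rewrite !Rplus_opp_r, Rabs_R0. ring. Qed.

Lemma short_of p q l : rpath p l -> rend p l = q -> plen p l = l1dist p q ->
  shortest_rpath p q l.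
Proof.
  intros Hr He Hp. split; [auto|split; [auto|]].
  intros l' Hr' He'. pose proof (plen_ge p l'). rewrite He' in H. lra.
Qed.

Lemma canon_h p q : exists lc, short1 p q lc /\ plen p lc = l1dist p q /\
  (forall z, on_path p lc z -> Lh p q z).
Proof.
  destruct p as [px py], q as [qx qy].
  destruct (Req_EM_T px qx) as [Ex|Ex]; destruct (Req_EM_T py qy) as [Ey|Ey].
  - subst. exists []. rewrite l1_self.
    split; [split; [apply short_of; simpl; auto; rewrite l1_self; auto|simpl; lia]|].
    split; [reflexivity|]. simpl. intros z Hz; subst. left; split; simpl; auto. apply btw_refl.
  - subst. exists [(qx,qy)].
    assert (P : plen (qx, py) [(qx, qy)] = l1dist (qx, py) (qx, qy)) by (simpl; ring).
    split; [split; [apply short_of; simpl; auto; unfold vstep; simpl; auto|simpl; lia]|].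
    split; [auto|]. simpl. intros z [Hz|Hz].
    + apply seg_v_inv in Hz; simpl in *; auto. right; tauto.
    + subst. right; simpl; split; auto. unfold btw; lra.
  - subst. exists [(qx,qy)].
    assert (P : plen (px, qy) [(qx, qy)] = l1dist (px, qy) (qx, qy)) by (simpl; ring).
    split; [split; [apply short_of; simpl; auto; unfold hstep; simpl; auto|simpl; lia]|].
    split; [auto|]. simpl. intros z [Hz|Hz].
    + apply seg_h_inv in Hz; simpl in *; auto. left; tauto.
    + subst. left; simpl; split; auto. unfold btw; lra.
  - exists [(qx,py); (qx,qy)].
    assert (P : plen (px, py) [(qx,py); (qx, qy)] = l1dist (px, py) (qx, qy)).
    { simpl. unfold l1dist; simpl. unfold Rminus. rewrite !Rplus_opp_r, Rabs_R0. ring. }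
    split; [split|split; [auto|]].
    + apply short_of; simpl; auto. unfold hstep, vstep; simpl; tauto.
    + rewrite ncorners_cons2. simpl.
      destruct (Req_EM_T py py); [|congruence]. destruct (Req_EM_T py qy); [congruence|]. lia.
    + simpl. intros z [Hz|[Hz|Hz]].
      * apply seg_h_inv in Hz; simpl in *; auto. left; tauto.
      * apply seg_v_inv in Hz; simpl in *; auto. right; tauto.
      * subst. right; simpl; split; auto. unfold btw; lra.
Qed.

Lemma canon_v p q : exists lc, short1 p q lc /\ plen p lc = l1dist p q /\
  (forall z, on_path p lc z -> Lv p q z).
Proof.
  destruct p as [px py], q as [qx qy].
  destruct (Req_EM_T px qx) as [Ex|Ex]; destruct (Req_EM_T py qy) as [Ey|Ey].
  - subst. exists []. rewrite l1_self.
    split; [split; [apply short_of; simpl; auto; rewrite l1_self; auto|simpl; lia]|].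
    split; [reflexivity|]. simpl. intros z Hz; subst. left; split; simpl; auto. apply btw_refl.
  - subst. exists [(qx,qy)].
    assert (P : plen (qx, py) [(qx, qy)] = l1dist (qx, py) (qx, qy)) by (simpl; ring).
    split; [split; [apply short_of; simpl; auto; unfold vstep; simpl; auto|simpl; lia]|].
    split; [auto|]. simpl. intros z [Hz|Hz].
    + apply seg_v_inv in Hz; simpl in *; auto. left; tauto.
    + subst. left; simpl; split; auto. unfold btw; lra.
  - subst. exists [(qx,qy)].
    assert (P : plen (px, qy) [(qx, qy)] = l1dist (px, qy) (qx, qy)) by (simpl; ring).
    split; [split; [apply short_of; simpl; auto; unfold hstep; simpl; auto|simpl; lia]|].
    split; [auto|]. simpl. intros z [Hz|Hz].
    + apply seg_h_inv in Hz; simpl in *; auto. right; tauto.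
    + subst. right; simpl; split; auto. unfold btw; lra.
  - exists [(px,qy); (qx,qy)].
    assert (P : plen (px, py) [(px,qy); (qx, qy)] = l1dist (px, py) (qx, qy)).
    { simpl. unfold l1dist; simpl. unfold Rminus. rewrite !Rplus_opp_r, Rabs_R0. ring. }
    split; [split|split; [auto|]].
    + apply short_of; simpl; auto. unfold hstep, vstep; simpl; tauto.
    + rewrite ncorners_cons2. simpl.
      destruct (Req_EM_T py qy); [congruence|]. destruct (Req_EM_T qy qy); [|congruence]. lia.
    + simpl. intros z [Hz|[Hz|Hz]].
      * apply seg_v_inv in Hz; simpl in *; auto. left; tauto.
      * apply seg_h_inv in Hz; simpl in *; auto. right; tauto.
      * subst. right; simpl; split; auto. unfold btw; lra.
Qed.

Lemma short_tight p q l : shortest_rpath p q l -> tight p l /\ rend p l = q.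
Proof.
  intros [Hr [He Hm]]. destruct (canon_h p q) as [lc [[[Hr' [He' _]] _] [Hp _]]].
  pose proof (Hm lc Hr' He'). pose proof (plen_ge p l). rewrite He in *.
  unfold tight. rewrite He. split; auto. lra.
Qed.


Definition nm (x0 A x : R) := (x - x0) / A.

Lemma nm_le x0 A x y : 0 < A -> (x <= y <-> nm x0 A x <= nm x0 A y).
Proof.
  intros HA. unfold nm, Rdiv. pose proof (Rinv_0_lt_compat A HA). split; intros H1.
  - apply Rmult_le_compat_r; lra.
  - apply Rmult_le_reg_r in H1; lra.
Qed.
Lemma nm_lt x0 A x y : 0 < A -> (x < y <-> nm x0 A x < nm x0 A y).
Proof.
  intros HA. unfold nm, Rdiv. pose proof (Rinv_0_lt_compat A HA). split; intros H1.
  - apply Rmult_lt_compat_r; lra.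
  - apply Rmult_lt_reg_r in H1; lra.
Qed.
Lemma nm_inj x0 A x y : 0 < A -> nm x0 A x = nm x0 A y -> x = y.
Proof. intros HA H. pose proof (nm_le x0 A x y HA). pose proof (nm_le x0 A y x HA). lra. Qed.
Lemma nm_btw x0 A a x c : 0 < A -> (btw a x c <-> btw (nm x0 A a) (nm x0 A x) (nm x0 A c)).
Proof.
  intros HA. unfold btw.
  rewrite (nm_le x0 A a x HA), (nm_le x0 A x c HA), (nm_le x0 A c x HA), (nm_le x0 A x a HA).
  tauto.
Qed.
Lemma nm_01 x0 x3 x : x0 < x3 -> (x0 < x < x3 <-> 0 < nm x0 (x3 - x0) x < 1).
Proof.
  intros H. assert (HA : 0 < x3 - x0) by lra.
  assert (E0 : nm x0 (x3 - x0) x0 = 0) by (unfold nm; field; lra).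
  assert (E1 : nm x0 (x3 - x0) x3 = 1) by (unfold nm; field; lra).
  rewrite (nm_lt x0 _ x0 x HA), (nm_lt x0 _ x x3 HA), E0, E1. tauto.
Qed.

Definition NLh (a b c e u v : R) := (v = b /\ btw a u c) \/ (u = c /\ btw b v e).
Definition NLv (a b c e u v : R) := (u = a /\ btw b v e) \/ (v = e /\ btw a u c).

Lemma core_h1 a b c e : ~(0<a<1 /\ 0<b<1) -> ~(0<c<1 /\ 0<e<1) ->
 (exists u v, ((v = b /\ btw a u c) \/ (u = c /\ btw b v e)) /\ 0<u<1 /\ 0<v<1) ->
 (exists u v, ((u = a /\ btw b v e) \/ (v = e /\ btw a u c)) /\ 0<u<1 /\ 0<v<1) ->
 (0<=b<=1 /\ btw a b c) \/ (0<=c<=1 /\ btw b c e).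
Proof. unfold btw. intros H1 H2 [u [v [Hu1 Hu2]]] [u' [v' [Hv1 Hv2]]]. lra. Qed.
Lemma core_h2 a b c e : ~(0<a<1 /\ 0<b<1) -> ~(0<c<1 /\ 0<e<1) ->
 (exists u v, ((v = b /\ btw a u c) \/ (u = c /\ btw b v e)) /\ 0<u<1 /\ 0<v<1) ->
 (exists u v, ((u = a /\ btw b v e) \/ (v = e /\ btw a u c)) /\ 0<u<1 /\ 0<v<1) ->
 (0<=b<=1 /\ btw a (1-b) c) \/ (0<=c<=1 /\ btw b (1-c) e).
Proof. unfold btw. intros H1 H2 [u [v [Hu1 Hu2]]] [u' [v' [Hv1 Hv2]]]. lra. Qed.
Lemma core_v1 a b c e : ~(0<a<1 /\ 0<b<1) -> ~(0<c<1 /\ 0<e<1) ->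
 (exists u v, ((v = b /\ btw a u c) \/ (u = c /\ btw b v e)) /\ 0<u<1 /\ 0<v<1) ->
 (exists u v, ((u = a /\ btw b v e) \/ (v = e /\ btw a u c)) /\ 0<u<1 /\ 0<v<1) ->
 (0<=a<=1 /\ btw b a e) \/ (0<=e<=1 /\ btw a e c).
Proof. unfold btw. intros H1 H2 [u [v [Hu1 Hu2]]] [u' [v' [Hv1 Hv2]]]. lra. Qed.
Lemma core_v2 a b c e : ~(0<a<1 /\ 0<b<1) -> ~(0<c<1 /\ 0<e<1) ->
 (exists u v, ((v = b /\ btw a u c) \/ (u = c /\ btw b v e)) /\ 0<u<1 /\ 0<v<1) ->
 (exists u v, ((u = a /\ btw b v e) \/ (v = e /\ btw a u c)) /\ 0<u<1 /\ 0<v<1) ->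
 (0<=a<=1 /\ btw b (1-a) e) \/ (0<=e<=1 /\ btw a (1-e) c).
Proof. unfold btw. intros H1 H2 [u [v [Hu1 Hu2]]] [u' [v' [Hv1 Hv2]]]. lra. Qed.

Section Norm.
Variables x1 x2 y1 y2 : R.
Hypothesis hx : x1 < x2.
Hypothesis hy : y1 < y2.
Let nx := nm x1 (x2 - x1).
Let ny := nm y1 (y2 - y1).

Lemma Lh_norm p q z : Lh p q z <-> NLh (nx (fst p)) (ny (snd p)) (nx (fst q)) (ny (snd q)) (nx (fst z)) (ny (snd z)).
Proof.
  assert (HA : 0 < x2 - x1) by lra. assert (HB : 0 < y2 - y1) by lra.
  unfold Lh, NLh, nx, ny. rewrite <- !nm_btw by auto.
  split; intros [[H1 H2]|[H1 H2]].
  - left; split; auto. rewrite H1; auto.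
  - right; split; auto. rewrite H1; auto.
  - left; split; auto. first [apply (nm_inj x1 (x2-x1)); solve [auto] | apply (nm_inj y1 (y2-y1)); solve [auto]].
  - right; split; auto. first [apply (nm_inj x1 (x2-x1)); solve [auto] | apply (nm_inj y1 (y2-y1)); solve [auto]].
Qed.

Lemma Lv_norm p q z : Lv p q z <-> NLv (nx (fst p)) (ny (snd p)) (nx (fst q)) (ny (snd q)) (nx (fst z)) (ny (snd z)).
Proof.
  assert (HA : 0 < x2 - x1) by lra. assert (HB : 0 < y2 - y1) by lra.
  unfold Lv, NLv, nx, ny. rewrite <- !nm_btw by auto.
  split; intros [[H1 H2]|[H1 H2]].
  - left; split; auto. rewrite H1; auto.
  - right; split; auto. rewrite H1; auto.
  - left; split; auto. first [apply (nm_inj x1 (x2-x1)); solve [auto] | apply (nm_inj y1 (y2-y1)); solve [auto]].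
  - right; split; auto. first [apply (nm_inj x1 (x2-x1)); solve [auto] | apply (nm_inj y1 (y2-y1)); solve [auto]].
Qed.

Lemma int_norm z : Defs.interior (rect x1 x2 y1 y2) z <-> (0 < nx (fst z) < 1 /\ 0 < ny (snd z) < 1).
Proof.
  unfold nx, ny. rewrite <- !nm_01 by auto. split.
  - apply int_rect.
  - intros [H1 H2]. apply rect_int; auto.
Qed.

Lemma core (a b c e : R) : ~(0<a<1 /\ 0<b<1) -> ~(0<c<1 /\ 0<e<1) ->
 (exists u v, NLh a b c e u v /\ 0<u<1 /\ 0<v<1) ->
 (exists u v, NLv a b c e u v /\ 0<u<1 /\ 0<v<1) ->
 (exists t, 0 <= t <= 1 /\ NLh a b c e t t) /\
 (exists t, 0 <= t <= 1 /\ NLh a b c e t (1 - t)) /\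
 (exists t, 0 <= t <= 1 /\ NLv a b c e t t) /\
 (exists t, 0 <= t <= 1 /\ NLv a b c e t (1 - t)).
Proof.
  unfold NLh, NLv. intros H1 H2 [u [v [Hu1 Hu2]]] [u' [v' [Hv1 Hv2]]].
  assert (E1 : exists u v, ((v = b /\ btw a u c) \/ (u = c /\ btw b v e)) /\ 0<u<1 /\ 0<v<1) by eauto.
  assert (E2 : exists u v, ((u = a /\ btw b v e) \/ (v = e /\ btw a u c)) /\ 0<u<1 /\ 0<v<1) by eauto.
  pose proof (core_h1 a b c e H1 H2 E1 E2) as C1.
  pose proof (core_h2 a b c e H1 H2 E1 E2) as C2.
  pose proof (core_v1 a b c e H1 H2 E1 E2) as C3.
  pose proof (core_v2 a b c e H1 H2 E1 E2) as C4.
  clear E1 E2 Hu1 Hu2 Hv1 Hv2.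
  split; [|split; [|split]].
  - destruct C1 as [[K1 K2]|[K1 K2]]; [exists b | exists c]; split; auto.
  - destruct C2 as [[K1 K2]|[K1 K2]]; [exists (1-b) | exists c]; (split; [lra|]).
    + left. split; [ring|auto].
    + right. split; auto.
  - destruct C3 as [[K1 K2]|[K1 K2]]; [exists a | exists e]; split; auto.
  - destruct C4 as [[K1 K2]|[K1 K2]]; [exists a | exists (1-e)]; (split; [lra|]).
    + left. split; auto.
    + right. split; [ring|auto].
Qed.

Lemma geo p q (d : segment) :
  (d = ((x1, y1), (x2, y2)) \/ d = ((x1, y2), (x2, y1))) ->
  ~ Defs.interior (rect x1 x2 y1 y2) p -> ~ Defs.interior (rect x1 x2 y1 y2) q ->
  (exists z, Lh p q z /\ Defs.interior (rect x1 x2 y1 y2) z) ->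
  (exists z, Lv p q z /\ Defs.interior (rect x1 x2 y1 y2) z) ->
  (exists w, Lh p q w /\ seg_set d w) /\ (exists w, Lv p q w /\ seg_set d w).
Proof.
  intros Hd Hp Hq [z [Hz Iz]] [z' [Hz' Iz']].
  rewrite int_norm in Hp, Hq, Iz, Iz'. rewrite Lh_norm in Hz. rewrite Lv_norm in Hz'.
  destruct (core _ _ _ _ Hp Hq (ex_intro _ _ (ex_intro _ _ (conj Hz Iz)))
     (ex_intro _ _ (ex_intro _ _ (conj Hz' Iz')))) as [D1 [D2 [D3 D4]]].
  assert (Fx : forall t, nx ((1 - t) * x1 + t * x2) = t) by (intros; unfold nx, nm; field; lra).
  assert (Fy : forall t, ny ((1 - t) * y1 + t * y2) = t) by (intros; unfold ny, nm; field; lra).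
  assert (Gy : forall t, ny ((1 - t) * y2 + t * y1) = 1 - t) by (intros; unfold ny, nm; field; lra).
  destruct Hd as [Hd|Hd]; subst d; split.
  - destruct D1 as [t [Ht Ht']]. exists ((1 - t) * x1 + t * x2, (1 - t) * y1 + t * y2).
    split. rewrite Lh_norm; simpl; rewrite Fx, Fy; auto. exists t; simpl; auto.
  - destruct D3 as [t [Ht Ht']]. exists ((1 - t) * x1 + t * x2, (1 - t) * y1 + t * y2).
    split. rewrite Lv_norm; simpl; rewrite Fx, Fy; auto. exists t; simpl; auto.
  - destruct D2 as [t [Ht Ht']]. exists ((1 - t) * x1 + t * x2, (1 - t) * y2 + t * y1).
    split. rewrite Lh_norm; simpl; rewrite Fx, Gy; auto. exists t; simpl; auto.
  - destruct D4 as [t [Ht Ht']]. exists ((1 - t) * x1 + t * x2, (1 - t) * y2 + t * y1).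
    split. rewrite Lv_norm; simpl; rewrite Fx, Gy; auto. exists t; simpl; auto.
Qed.
End Norm.


Lemma inside_d x1 x2 y1 y2 (hx : x1 < x2) (hy : y1 < y2) (d : segment)
  (hd : d = ((x1, y1), (x2, y2)) \/ d = ((x1, y2), (x2, y1))) :
  inside (rect x1 x2 y1 y2) [d].
Proof.
  intros s z [Hs|[]] [t [Ht [H1 H2]]]. subst s. unfold rect.
  destruct hd as [E|E]; subst d; simpl in *; rewrite H1, H2; split; split; nra.
Qed.

Lemma skel_d x1 x2 y1 y2 (hx : x1 < x2) (hy : y1 < y2) (d : segment)
  (hd : d = ((x1, y1), (x2, y2)) \/ d = ((x1, y2), (x2, y1))) :
  skeleton (rect x1 x2 y1 y2) [d].
Proof.
  split; [apply inside_d; auto|].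
  intros p q Hp Hq H l [Hs Hn].
  destruct (short_tight _ _ _ Hs) as [Ht He].
  destruct Hs as [Hr _].
  destruct (canon_h p q) as [lh [Sh [_ Ph]]].
  destruct (canon_v p q) as [lv [Sv [_ Pv]]].
  destruct (H lh Sh) as [zh [Oh Ih]].
  destruct (H lv Sv) as [zv [Ov Iv]].
  destruct (geo x1 x2 y1 y2 hx hy p q d hd Hp Hq (ex_intro _ zh (conj (Ph _ Oh) Ih))
     (ex_intro _ zv (conj (Pv _ Ov) Iv))) as [[w1 [W1 D1]] [w2 [W2 D2]]].
  destruct (cover p l Hr Ht Hn) as [C|C]; rewrite He in C.
  - exists d, w1. split; [left; auto|split; auto].
  - exists d, w2. split; [left; auto|split; auto].
Qed.

Lemma not_skel_nil x1 x2 y1 y2 (hx : x1 < x2) (hy : y1 < y2) :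
  ~ skeleton (rect x1 x2 y1 y2) [].
Proof.
  intros [_ Sk].
  set (m := (y1 + y2) / 2).
  set (p := (x1, m)). set (q := (x2, m)).
  assert (Hp : ~ Defs.interior (rect x1 x2 y1 y2) p).
  { intros I. apply int_rect in I. simpl in I. lra. }
  assert (Hq : ~ Defs.interior (rect x1 x2 y1 y2) q).
  { intros I. apply int_rect in I. simpl in I. lra. }
  destruct (canon_h p q) as [lc [Sc _]].
  assert (H : forall l, short1 p q l -> exists z, on_path p l z /\ Defs.interior (rect x1 x2 y1 y2) z).
  { intros l [Hs Hn]. destruct (short_tight _ _ _ Hs) as [Ht He].
    destruct Hs as [Hr _].
    destruct l as [|b l].
    - unfold rend in He; simpl in He. unfold p, q in He. injection He. lra.
    - destruct (tight_cons _ _ _ Ht) as [_ [Bx By]].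
      rewrite <- rend_cons with (p := p) in Bx, By. rewrite He in Bx, By.
      unfold p, q in Bx, By; simpl in Bx, By.
      assert (Eb : snd b = m) by (unfold btw in By; lra).
      simpl in Hr. destruct Hr as [[[H1 H2]|[H1 H2]] _]; unfold p in H1, H2; simpl in H1, H2; [|lra].
      exists ((x1 + fst b) / 2, m). split.
      + left. apply seg_h; unfold p; simpl; auto. unfold btw in *; lra.
      + apply rect_int; simpl; unfold btw, m in *; lra. }
  destruct (Sk p q Hp Hq H lc Sc) as [s [z [[] _]]].
Qed.

Theorem corollary1 (x1 x2 y1 y2 : R) (hx : x1 < x2) (hy : y1 < y2)
  (d : segment)
  (hd : d = ((x1, y1), (x2, y2)) \/ d = ((x1, y2), (x2, y1))) :
  min_skeleton (rect x1 x2 y1 y2) [d].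
Proof.
  split; [apply skel_d; auto|].
  intros S' HS. destruct S' as [|s S'].
  - exfalso. apply (not_skel_nil x1 x2 y1 y2 hx hy HS).
  - simpl. lia.
Qed.
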